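(* Let $X$ be a represented space, let $Y$ be a computable metric space and let $f:X\to Y$ be a single-valued (total) function. If there is a multi-valued function $g$ (not necessarily computable) with values in $\mathrm{Tr}$ such that $f\le_W\tfrac12\text{-}\mathsf{WWKL}\circ g$, then $f$ is computable.
   Context: A represented space is a pair $(X,\delta_X)$ with $\delta_X:\subseteq\mathbb{N}^\mathbb{N}\to X$ a partial surjection; a computable metric space is represented by its Cauchy representation. A realizer of $f:\subseteq X\rightrightarrows Y$ is a partial $F$ with $\delta_Y F(p)\in f(\delta_X(p))$ for all $p\in\mathrm{dom}(f\circ\delta_X)$; $f$ is computable if it has a computable realizer. $f\le_W g$ if there are computable partial $H,K:\subseteq\mathbb{N}^\mathbb{N}\to\mathbb{N}^\mathbb{N}$ such that $p\mapsto H\langle p,GK(p)\rangle$ realizes $f$ for every realizer $G$ of $g$. Composition of multi-valued functions: $(h\circ g)(x)=\{z:\exists y\in g(x),\ z\in h(y)\}$ with $\mathrm{dom}(h\circ g)=\{x:g(x)\subseteq\mathrm{dom}(h)\}$. $\mathrm{Tr}$ is the set of binary trees $T\subseteq\{0,1\}^*$, represented by characteristic functions; $[T]$ its set of infinite paths; $\mu$ the uniform measure on $2^\mathbb N$ ($\mu(w2^\mathbb N)=2^{-|w|}$). $\tfrac12\text{-}\mathsf{WWKL}:\subseteq\mathrm{Tr}\rightrightarrows2^\mathbb N$, $T\mapsto[T]$, with domain $\{T:\mu([T])>\tfrac12\}$. *)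

(* Defs.v *)
From Stdlib Require Import Reals List PArith Arith.
Open Scope R_scope.

Inductive recf : Type :=
| RZero : recf
| RSucc : recf
| RProj : nat -> recf
| RComp : recf -> list recf -> recf
| RPrec : recf -> recf -> recf
| RMin  : recf -> recf.

Inductive eval : recf -> list nat -> nat -> Prop :=
| ev_zero xs : eval RZero xs 0
| ev_succ x xs : eval RSucc (x :: xs) (S x)
| ev_proj i xs : eval (RProj i) xs (nth i xs 0%nat)
| ev_comp f gs xs ys y : eval_list gs xs ys -> eval f ys y -> eval (RComp f gs) xs y
| ev_prec0 f g xs y : eval f xs y -> eval (RPrec f g) (0%nat :: xs) y
| ev_precS f g n xs r y : eval (RPrec f g) (n :: xs) r -> eval g (n :: r :: xs) y ->
    eval (RPrec f g) (S n :: xs) y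
| ev_min f xs n : eval f (n :: xs) 0%nat ->
    (forall m, (m < n)%nat -> exists k, eval f (m :: xs) (S k)) -> eval (RMin f) xs n
with eval_list : list recf -> list nat -> list nat -> Prop :=
| evl_nil xs : eval_list nil xs nil
| evl_cons g gs xs y ys : eval g xs y -> eval_list gs xs ys -> eval_list (g :: gs) xs (y :: ys).

Definition npair (a b : nat) : nat := ((a + b) * (a + b + 1) / 2 + b)%nat.

Fixpoint code (l : list nat) : nat :=
  match l with nil => 0%nat | x :: l' => S (npair x (code l')) end.

Definition baire := nat -> nat.

Definition prefix {A : Type} (p : nat -> A) (k : nat) : list A := map p (seq 0 k).

Definition bpair (p q : baire) : baire :=
  fun n => if Nat.even n then p (Nat.div2 n) else q (Nat.div2 n).

Definition machine_computes (e : recf) (p q : baire) : Prop :=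
  forall n,
    (exists k, eval e (npair n (code (prefix p k)) :: nil) (S (q n))) /\
    (forall k v, eval e (npair n (code (prefix p k)) :: nil) (S v) -> v = q n).

Record pfun := { pdom : baire -> Prop ; pval : baire -> baire }.

Definition pcomputable (F : pfun) : Prop :=
  exists e, forall p, pdom F p -> machine_computes e p (pval F p).

Record rep_space := { carrier :> Type ; delta : baire -> carrier -> Prop }.

(** delta is a partial surjection (given as a single-valued relation) *)
Definition is_rep_space (X : rep_space) : Prop :=
  (forall p x y, delta X p x -> delta X p y -> x = y) /\
  (forall x : carrier X, exists p, delta X p x).

Definition mvfun (X Y : rep_space) := carrier X -> carrier Y -> Prop.

Definition mvdom {X Y : rep_space} (f : mvfun X Y) (x : carrier X) : Prop :=
  exists y, f x y.

Definition mvcomp {X Y Z : rep_space} (h : mvfun Y Z) (g : mvfun X Y) : mvfun X Z :=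
  fun x z => (exists y, g x y /\ h y z) /\ (forall y, g x y -> mvdom h y).

Definition realizer {X Y : rep_space} (F : pfun) (f : mvfun X Y) : Prop :=
  forall p x, delta X p x -> mvdom f x ->
    pdom F p /\ exists y, delta Y (pval F p) y /\ f x y.

Definition computable {X Y : rep_space} (f : mvfun X Y) : Prop :=
  exists F, pcomputable F /\ realizer F f.

Definition weihrauch_le {X Y U V : rep_space} (f : mvfun X Y) (g : mvfun U V) : Prop :=
  exists H K : pfun, pcomputable H /\ pcomputable K /\
    forall G : pfun, realizer G g ->
      realizer {| pdom := fun p => pdom K p /\ pdom G (pval K p) /\
                                    pdom H (bpair p (pval G (pval K p)));
                  pval := fun p => pval H (bpair p (pval G (pval K p))) |} f.

Definition sv_mv {X Y : rep_space} (f : carrier X -> carrier Y) : mvfun X Y :=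
  fun x y => y = f x.

Record cmetric := {
  cm_carrier : Type ;
  cm_d : cm_carrier -> cm_carrier -> R ;
  cm_alpha : nat -> cm_carrier
}.

Definition is_computable_metric_space (M : cmetric) : Prop :=
  let d := cm_d M in let a := cm_alpha M in
  (forall x y, 0 <= d x y) /\
  (forall x y, d x y = 0 <-> x = y) /\
  (forall x y, d x y = d y x) /\
  (forall x y z, d x z <= d x y + d y z) /\
  (forall x eps, 0 < eps -> exists i, d (a i) x < eps) /\
  (* d o (alpha x alpha) is computable: uniformly approximable by rationals *)
  (exists e1 e2 : recf, forall i j n, exists u v,
      eval e1 (i :: j :: n :: nil) u /\ eval e2 (i :: j :: n :: nil) v /\
      Rabs (d (a i) (a j) - INR u / (INR v + 1)) <= (/2) ^ n).

Definition cauchy_space (M : cmetric) : rep_space :=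
  {| carrier := cm_carrier M ;
     delta := fun p x =>
       (forall i j, (i < j)%nat -> cm_d M (cm_alpha M (p i)) (cm_alpha M (p j)) <= (/2) ^ i) /\
       (forall eps, 0 < eps -> exists N, forall n, (N <= n)%nat ->
           cm_d M (cm_alpha M (p n)) x < eps) |}.

Fixpoint word_of_pos (q : positive) : list bool :=
  match q with
  | xH => nil
  | xO q' => word_of_pos q' ++ false :: nil
  | xI q' => word_of_pos q' ++ true :: nil
  end.

(** standard enumeration of {0,1}^*: w_n = binary expansion of n+1 without leading 1 *)
Definition word (n : nat) : list bool := word_of_pos (Pos.of_succ_nat n).

Definition is_tree (T : list bool -> bool) : Prop :=
  forall u v, T (u ++ v) = true -> T u = true.

Definition tree := { T : list bool -> bool | is_tree T }.

Definition bit (b : bool) : nat := if b then 1%nat else 0%nat.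

Definition Tr : rep_space :=
  {| carrier := tree ;
     delta := fun p T => forall n, p n = bit (proj1_sig T (word n)) |}.

Definition Cantor : rep_space :=
  {| carrier := nat -> bool ;
     delta := fun p x => forall n, p n = bit (x n) |}.

Definition paths (T : tree) (x : nat -> bool) : Prop :=
  forall n, proj1_sig T (prefix x n) = true.

(** Uniform measure, via the outer measure from cylinders. *)
Definition cyl_covers (c : nat -> option (list bool)) (A : (nat -> bool) -> Prop) : Prop :=
  forall x, A x -> exists i w, c i = Some w /\ prefix x (length w) = w.

Definition cover_weight (c : nat -> option (list bool)) (N : nat) : R :=
  sum_f_R0 (fun i => match c i with Some w => (/2) ^ (length w) | None => 0 end) N.

Definition measure_ge (A : (nat -> bool) -> Prop) (r : R) : Prop :=
  forall c, cyl_covers c A -> forall s, s < r -> exists N, s < cover_weight c N.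

Definition measure_gt (A : (nat -> bool) -> Prop) (r : R) : Prop :=
  exists r', r < r' /\ measure_ge A r'.

Definition WWKL_half : mvfun Tr Cantor :=
  fun T x => measure_gt (paths T) (/2) /\ paths T x.

(* Main.v *)
Require Import Defs.
From Stdlib Require Import Reals List.
From Stdlib Require Import Arith Lia Lra Classical ClassicalDescription IndefiniteDescription.
Import ListNotations.
Open Scope nat_scope.

Inductive ex : Type :=
| EV (i:nat) | EZ | ES (a:ex) | EApp (b:ex) (args: exl)
| EExt (r:recf) (F: list nat -> nat) (args: exl)
| ELoop (b i s : ex)
with exl : Type := ENil | ECons (a:ex) (l:exl).

Fixpoint loopf (n:nat) (i:nat) (s: nat -> nat -> nat) : nat :=
  match n with 0 => i | S n' => s n' (loopf n' i s) end.

Fixpoint sem (env: list nat) (e: ex) : nat :=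
  match e with
  | EV i => nth i env 0
  | EZ => 0
  | ES a => S (sem env a)
  | EApp b args => sem (seml env args) b
  | EExt r F args => F (seml env args)
  | ELoop b i s => loopf (sem env b) (sem env i) (fun t acc => sem (t :: acc :: env) s)
  end
with seml (env: list nat) (l: exl) : list nat :=
  match l with ENil => nil | ECons a l => sem env a :: seml env l end.

Fixpoint lenl (l:exl) : nat := match l with ENil => 0 | ECons _ l => S (lenl l) end.

Fixpoint wf (e:ex) : Prop :=
  match e with
  | EV _ | EZ => True
  | ES a => wf a
  | EApp b args => wf b /\ wfl args
  | EExt r F args => (forall l, length l = lenl args -> eval r l (F l)) /\ wfl args
  | ELoop b i s => wf b /\ wf i /\ wf s
  end
with wfl (l:exl) : Prop := match l with ENil => True | ECons a l => wf a /\ wfl l end.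

Fixpoint comp (n:nat) (e:ex) : recf :=
 match e with
 | EV i => RProj i
 | EZ => RZero
 | ES a => RComp RSucc [comp n a]
 | EApp b args => RComp (comp (lenl args) b) (compl n args)
 | EExt r F args => RComp r (compl n args)
 | ELoop b i s => RComp (RPrec (comp n i) (comp (S (S n)) s)) (comp n b :: map RProj (seq 0 n))
 end
with compl (n:nat) (l:exl) : list recf :=
 match l with ENil => nil | ECons a l => comp n a :: compl n l end.

Scheme ex_mut := Induction for ex Sort Prop with exl_mut := Induction for exl Sort Prop.

Lemma seml_len env l : length (seml env l) = lenl l.
Proof. induction l; simpl; auto. Qed.

Lemma projs_eval : forall env n k, k + n = length env ->
  eval_list (map RProj (seq k n)) env (skipn k env).
Proof.
  intros env n. induction n; intros k Hk; simpl.
  - rewrite skipn_all2 by lia. constructor.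
  - assert (Hs: skipn k env = nth k env 0 :: skipn (S k) env).
    { clear IHn. revert k Hk. induction env; intros k Hk; simpl in *. lia.
      destruct k; simpl; auto. }
    rewrite Hs. constructor. constructor. apply IHn. lia.
Qed.

Lemma prec_eval f g env i s :
  eval f env i ->
  (forall t acc, eval g (t :: acc :: env) (s t acc)) ->
  forall n, eval (RPrec f g) (n :: env) (loopf n i s).
Proof.
  intros Hf Hg n. induction n; simpl.
  - constructor; auto.
  - econstructor; eauto.
Qed.

Lemma comp_correct : forall e n env, length env = n -> wf e -> eval (comp n e) env (sem env e).
Proof.
  apply (ex_mut (fun e => forall n env, length env = n -> wf e -> eval (comp n e) env (sem env e))
                (fun l => forall n env, length env = n -> wfl l -> eval_list (compl n l) env (seml env l)));
   simpl; intros.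
  - constructor.
  - constructor.
  - econstructor. constructor. eauto. constructor. constructor.
  - destruct H2. econstructor. eapply H0; eauto. apply H; auto. apply seml_len.
  - destruct H1. econstructor. eapply H; eauto. apply H1. apply seml_len.
  - destruct H3 as [? [? ?]]. econstructor.
    + constructor. eapply H; eauto.
      replace env with (skipn 0 env) at 2 by reflexivity. apply projs_eval. lia.
    + apply prec_eval. eapply H0; eauto. intros. apply H1; auto. simpl. lia.
  - constructor.
  - destruct H2. constructor; eauto.
Qed.

Fixpoint el (l : list ex) : exl := match l with nil => ENil | a :: l => ECons a (el l) end.
Lemma seml_el env l : seml env (el l) = map (sem env) l.
Proof. induction l; simpl; congruence. Qed.
Lemma lenl_el l : lenl (el l) = length l.
Proof. induction l; simpl; congruence. Qed.
Lemma wfl_el l : Forall wf l -> wfl (el l).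
Proof. induction 1; simpl; auto. Qed.

Definition Pred x := EApp (ELoop (EV 0) EZ (EV 0)) (el [x]).
Definition Add a b := EApp (ELoop (EV 1) (EV 0) (ES (EV 1))) (el [a;b]).
Definition Sub a b := EApp (ELoop (EV 1) (EV 0) (Pred (EV 1))) (el [a;b]).
Definition Mul a b := EApp (ELoop (EV 1) EZ (Add (EV 1) (EV 2))) (el [a;b]).
Fixpoint K (c:nat) : ex := match c with 0 => EZ | S c => ES (K c) end.
Definition IsZ x := Sub (K 1) x.
Definition If c a b := Add (Mul (Sub (K 1) (IsZ c)) a) (Mul (IsZ c) b).
Definition Le a b := IsZ (Sub a b).

Arguments Pred : simpl never.
Arguments Add : simpl never.
Arguments Sub : simpl never.
Arguments Mul : simpl never.
Arguments IsZ : simpl never.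
Arguments If : simpl never.
Arguments Le : simpl never.
Lemma loopf_ext n i s1 s2 : (forall t acc, s1 t acc = s2 t acc) -> loopf n i s1 = loopf n i s2.
Proof. intros H; induction n; simpl; congruence. Qed.

Lemma sem_Pred env x : sem env (Pred x) = pred (sem env x).
Proof. unfold Pred. simpl. destruct (sem env x); reflexivity. Qed.
Lemma sem_Add env a b : sem env (Add a b) = sem env a + sem env b.
Proof. unfold Add. simpl. generalize (sem env b). induction n; simpl; lia. Qed.
Lemma sem_Sub env a b : sem env (Sub a b) = sem env a - sem env b.
Proof. unfold Sub. cbn [sem seml el].
  rewrite (loopf_ext _ _ _ (fun _ acc => pred acc)) by (intros; rewrite sem_Pred; reflexivity).
  cbn [nth]. generalize (sem env b). induction n; simpl. lia. rewrite IHn. lia. Qed.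
Lemma sem_Mul env a b : sem env (Mul a b) = sem env a * sem env b.
Proof. unfold Mul. cbn [sem seml el].
  rewrite (loopf_ext _ _ _ (fun _ acc => acc + sem env a)) by (intros; rewrite sem_Add; reflexivity).
  cbn [nth]. generalize (sem env b). induction n; simpl. lia. rewrite IHn. lia. Qed.
Lemma sem_K env c : sem env (K c) = c.
Proof. induction c; simpl; auto. Qed.
Lemma sem_IsZ env x : sem env (IsZ x) = if sem env x =? 0 then 1 else 0.
Proof. unfold IsZ. rewrite sem_Sub, sem_K. destruct (sem env x); reflexivity. Qed.
Lemma sem_If env c a b : sem env (If c a b) = if sem env c =? 0 then sem env b else sem env a.
Proof. unfold If. rewrite sem_Add, !sem_Mul, sem_Sub, sem_K, sem_IsZ.
  destruct (sem env c); simpl; lia. Qed.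
Lemma sem_Le env a b : sem env (Le a b) = if sem env a <=? sem env b then 1 else 0.
Proof. unfold Le. rewrite sem_IsZ, sem_Sub. destruct (Nat.leb_spec (sem env a) (sem env b)).
  replace (sem env a - sem env b) with 0 by lia. auto.
  destruct (sem env a - sem env b) eqn:E; [lia|auto]. Qed.

Lemma wf_Pred x : wf x -> wf (Pred x). Proof. unfold Pred; simpl; tauto. Qed.
Lemma wf_Add a b : wf a -> wf b -> wf (Add a b). Proof. unfold Add; simpl; tauto. Qed.
Lemma wf_Sub a b : wf a -> wf b -> wf (Sub a b). Proof. unfold Sub; simpl; intuition. Qed.
Lemma wf_Mul a b : wf a -> wf b -> wf (Mul a b). Proof. unfold Mul; simpl; intuition. Qed.
Lemma wf_K c : wf (K c). Proof. induction c; simpl; auto. Qed.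
Lemma wf_IsZ x : wf x -> wf (IsZ x). Proof. intros; apply wf_Sub; auto using wf_K. Qed.
Lemma wf_If c a b : wf c -> wf a -> wf b -> wf (If c a b).
Proof. intros. unfold If. auto using wf_Add, wf_Mul, wf_Sub, wf_K, wf_IsZ. Qed.
Lemma wf_Le a b : wf a -> wf b -> wf (Le a b). Proof. intros; apply wf_IsZ, wf_Sub; auto. Qed.

Definition ff (B:nat) (G:nat -> nat) : nat := loopf B 0 (fun t acc => if acc =? 0 then G t else acc).
Definition FF (bound G : ex) : ex := ELoop bound EZ (If (EV 1) (EV 1) G).
Lemma sem_FF env b G : sem env (FF b G) = ff (sem env b) (fun t => sem (t :: 0 :: env) G).
Proof. unfold FF, ff. cbn [sem]. apply loopf_ext. intros. rewrite sem_If. cbn [nth].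
  destruct acc; reflexivity. Qed.
Lemma wf_FF b G : wf b -> wf G -> wf (FF b G).
Proof. intros; unfold FF; simpl; repeat split; auto. Qed.

Lemma ff_spec B G : (ff B G = 0 /\ forall t, t < B -> G t = 0) \/
   (exists t, t < B /\ ff B G = G t /\ G t <> 0 /\ forall t', t' < t -> G t' = 0).
Proof.
  unfold ff. induction B; simpl.
  - left; split; auto; intros; lia.
  - destruct IHB as [[H1 H2]|[t [H1 [H2 [H3 H4]]]]].
    + rewrite H1. simpl. destruct (G B =? 0) eqn:E.
      * apply Nat.eqb_eq in E. left. split; auto. intros t Ht. destruct (Nat.eq_dec t B); subst; auto. apply H2; lia.
      * apply Nat.eqb_neq in E. right. exists B. repeat split; auto; intros; apply H2; lia.
    + right. exists t. rewrite H2. destruct (G t =? 0) eqn:E. apply Nat.eqb_eq in E; congruence.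
      repeat split; auto.
Qed.

Lemma ff_ext B G1 G2 : (forall t, t < B -> G1 t = G2 t) -> ff B G1 = ff B G2.
Proof. unfold ff. induction B; simpl; intros; auto. rewrite IHB by auto. rewrite H by lia. auto. Qed.

Lemma ff_mono B B' G : B <= B' -> ff B G <> 0 -> ff B' G = ff B G.
Proof.
  intros HB H. destruct (ff_spec B G) as [[H1 _]|[t [H1 [H2 [H3 H4]]]]]; [congruence|].
  destruct (ff_spec B' G) as [[H5 H6]|[t' [H5 [H6 [H7 H8]]]]].
  - exfalso. apply H3. apply H6. lia.
  - rewrite H2, H6. destruct (Nat.lt_trichotomy t t') as [?|[?|?]]; subst; auto.
    + exfalso; apply H3, H8; auto.
    + exfalso; apply H7, H4; auto.
Qed.
Ltac cs := cbn -[Pred Add Sub Mul IsZ If Le FF] in *.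

Section RI.
Variable P : recf -> Prop.
Hypothesis HZ : P RZero.
Hypothesis HS : P RSucc.
Hypothesis HP : forall i, P (RProj i).
Hypothesis HC : forall f gs, P f -> Forall P gs -> P (RComp f gs).
Hypothesis HR : forall f g, P f -> P g -> P (RPrec f g).
Hypothesis HM : forall f, P f -> P (RMin f).
Fixpoint recf_ind2 (e : recf) : P e :=
  match e with
  | RZero => HZ | RSucc => HS | RProj i => HP i
  | RComp f gs => HC f gs (recf_ind2 f)
     ((fix go (l : list recf) : Forall P l :=
        match l with nil => Forall_nil _ | g :: l => Forall_cons _ (recf_ind2 g) (go l) end) gs)
  | RPrec f g => HR f g (recf_ind2 f) (recf_ind2 g)
  | RMin f => HM f (recf_ind2 f)
  end.
End RI.

Definition vars k n := el (map EV (seq k n)).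
Fixpoint AllNZ (l : list ex) : ex := match l with nil => K 1 | a :: l => If a (AllNZ l) EZ end.
Definition Enc2 t v := If v (If (Pred v) EZ (ES (ES t))) (K 1).

Fixpoint clockE (e:recf) (a:nat) : ex :=
 match e with
 | RZero => K 1
 | RSucc => match a with 0 => EZ | _ => ES (ES (EV 1)) end
 | RProj i => ES (EV (S i))
 | RComp f gs =>
     If (AllNZ (map (fun g => clockE g a) gs))
        (EApp (clockE f (length gs)) (ECons (EV 0) (el (map (fun g => Pred (clockE g a)) gs)))) EZ
 | RPrec f g => match a with 0 => EZ | S a' =>
     EApp (ELoop (EV 0) (EApp (clockE f a') (ECons (EV 1) (vars 2 a')))
                 (If (EV 1) (EApp (clockE g (S a)) (ECons (EV 3) (ECons (EV 0) (ECons (Pred (EV 1)) (vars 4 a'))))) EZ))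
          (ECons (EV 1) (ECons (EV 0) (vars 2 a')))
   end
 | RMin f => Pred (FF (EV 0) (Enc2 (EV 0) (EApp (clockE f (S a)) (ECons (EV 2) (ECons (EV 0) (vars 3 a))))))
 end.

Definition allnz (l : list nat) : bool := forallb (fun v => negb (v =? 0)) l.
Definition enc2 t v := if v =? 0 then 1 else if pred v =? 0 then S (S t) else 0.

Fixpoint evalc (e:recf) (F:nat) (xs:list nat) : nat :=
 match e with
 | RZero => 1
 | RSucc => match xs with nil => 0 | x :: _ => S (S x) end
 | RProj i => S (nth i xs 0)
 | RComp f gs => if allnz (map (fun g => evalc g F xs) gs)
                 then evalc f F (map (fun g => pred (evalc g F xs)) gs) else 0
 | RPrec f g => match xs with nil => 0 | n :: xs' =>
      loopf n (evalc f F xs') (fun t acc => if acc =? 0 then 0 else evalc g F (t :: pred acc :: xs')) end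
 | RMin f => pred (ff F (fun t => enc2 t (evalc f F (t :: xs))))
 end.

Lemma seml_vars env k n : k + n <= length env ->
  seml env (vars k n) = firstn n (skipn k env).
Proof.
  unfold vars. rewrite seml_el, map_map. revert k. induction n; intros k Hk; simpl. auto.
  simpl. destruct (skipn k env) eqn:E.
  - exfalso. assert (length (skipn k env) = length env - k) by apply length_skipn. rewrite E in H; simpl in H. lia.
  - f_equal. rewrite <- (firstn_skipn k env) at 1. rewrite E. rewrite app_nth2; rewrite length_firstn; try lia.
    replace (k - Init.Nat.min k (length env)) with 0 by lia. reflexivity.
    rewrite IHn by lia. f_equal.
    rewrite <- (skipn_skipn 1 k). rewrite E. reflexivity.
Qed.

Lemma sem_AllNZ env l : sem env (AllNZ l) = if allnz (map (sem env) l) then 1 else 0.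
Proof. induction l; cs. reflexivity. rewrite sem_If, IHl. destruct (sem env a); reflexivity. Qed.

Lemma sem_Enc2 env t v : sem env (Enc2 t v) = enc2 (sem env t) (sem env v).
Proof. unfold Enc2, enc2. rewrite !sem_If, sem_Pred, sem_K. destruct (sem env v); simpl; auto.
Qed.

Lemma clock_sem : forall e a F xs, length xs = a -> sem (F :: xs) (clockE e a) = evalc e F xs.
Proof.
  induction e using recf_ind2; intros a F xs Hl; cs.
  - reflexivity.
  - destruct a; destruct xs; simpl in *; try lia; auto.
  - reflexivity.
  - rewrite sem_If, sem_AllNZ, map_map.
    rewrite (map_ext_in _ (fun g => evalc g F xs)).
    2:{ intros g Hg. rewrite Forall_forall in H. apply H; auto. }
    destruct (allnz _); simpl; auto.
    rewrite seml_el, map_map.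
    rewrite (map_ext_in _ (fun g => pred (evalc g F xs))).
    2:{ intros g Hg. rewrite sem_Pred. rewrite Forall_forall in H. rewrite H; auto. }
    apply IHe. simpl. rewrite length_map. reflexivity.
  - destruct a; destruct xs as [|n xs']; cs; try lia; auto.
    injection Hl as Hl. subst a.
    rewrite (seml_vars (F :: n :: xs')) by (cs; lia). cs. rewrite firstn_all.
    rewrite seml_vars by (cs; lia). cs. rewrite firstn_all.
    rewrite IHe1 by auto.
    apply loopf_ext. intros t acc. rewrite sem_If. cs.
    destruct acc; cs; auto.
    rewrite sem_Pred. rewrite seml_vars by (cs; lia). cs. rewrite firstn_all.
    apply IHe2. cs. lia.
  - rewrite sem_Pred, sem_FF. f_equal. apply ff_ext. intros t _.
    rewrite sem_Enc2. cs. rewrite seml_vars by (cs; lia). cs. subst a; rewrite firstn_all.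
    rewrite IHe by (cs; lia). reflexivity.
Qed.

Lemma wf_vars k n : wfl (vars k n).
Proof. unfold vars. apply wfl_el. apply Forall_forall. intros x Hx. apply in_map_iff in Hx. destruct Hx as [? [<- _]]. exact I. Qed.

Lemma wf_AllNZ l : Forall wf l -> wf (AllNZ l).
Proof. induction 1; cbn [AllNZ]. apply wf_K. apply wf_If; auto. exact I. Qed.

Ltac wft := repeat (first [ exact I 
   | match goal with |- wf (K _) => apply wf_K end
   | match goal with |- wf (If _ _ _) => apply wf_If end
   | match goal with |- wf (Pred _) => apply wf_Pred end
   | match goal with |- wf (FF _ _) => apply wf_FF end
   | match goal with |- wfl (vars _ _) => apply wf_vars end | match goal with H: forall a, wf (clockE ?e a) |- wf (clockE ?e _) => apply H end | split | assumption ]).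

Lemma wf_clock : forall e a, wf (clockE e a).
Proof.
  induction e using recf_ind2; intros a; cbn [clockE].
  - apply wf_K.
  - destruct a; exact I.
  - exact I.
  - apply wf_If; [| |exact I].
    + apply wf_AllNZ. rewrite Forall_forall in *. intros x Hx. apply in_map_iff in Hx. destruct Hx as [g [<- Hg]]. auto.
    + cbn [wf wfl]. split; auto. split. exact I. apply wfl_el.
      rewrite Forall_forall in *. intros x Hx. apply in_map_iff in Hx. destruct Hx as [g [<- Hg]]. apply wf_Pred; auto.
  - destruct a. exact I. wft.
  - apply wf_Pred. apply wf_FF. exact I. unfold Enc2. wft; auto.
Qed.

Lemma enc2_inv t v z : enc2 t v = z -> (z = 0 /\ exists k, v = S (S k)) \/ (z = 1 /\ v = 0) \/ (z = S (S t) /\ v = 1).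
Proof. unfold enc2. destruct v as [|[|k]]; simpl; intros <-; eauto. Qed.

Lemma allnz_map l : allnz (map S l) = true.
Proof. induction l; simpl; auto. Qed.

Lemma evalc_sound : forall e F xs y, evalc e F xs = S y -> eval e xs y.
Proof.
  induction e using recf_ind2; intros F xs y Hy; simpl in Hy.
  - injection Hy as <-. constructor.
  - destruct xs; try discriminate. injection Hy as <-. constructor.
  - injection Hy as <-. constructor.
  - destruct (allnz _) eqn:E; try discriminate.
    econstructor; [|eapply IHe; eauto].
    clear IHe Hy. induction H; simpl in *. constructor.
    destruct (evalc x F xs) eqn:Ex; simpl in E; try discriminate.
    constructor; eauto.
  - destruct xs as [|n xs']; try discriminate.
    revert y Hy. induction n; simpl; intros y Hy.
    + constructor. eauto.
    + destruct (loopf n _ _) eqn:El; simpl in Hy; try discriminate.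
      econstructor; eauto.
  - destruct (ff_spec F (fun t => enc2 t (evalc e F (t :: xs)))) as [[H1 _]|[t [H1 [H2 [H3 H4]]]]].
    + rewrite H1 in Hy; discriminate.
    + rewrite H2 in Hy. destruct (enc2_inv t (evalc e F (t :: xs)) _ eq_refl) as [[? _]|[[? _]|[? ?]]]; try congruence.
      * rewrite H in Hy; discriminate.
      * rewrite H in Hy. injection Hy as <-.
        constructor. eapply IHe; eauto.
        intros m Hm. specialize (H4 m Hm).
        destruct (enc2_inv m (evalc e F (m :: xs)) _ H4) as [[_ [k Hk]]|[[? _]|[? _]]]; try discriminate.
        exists k. eapply IHe; eauto.
Qed.

Lemma fuel_bound (n : nat) (P : nat -> nat -> Prop) :
  (forall m, m < n -> exists F0, forall F, F0 <= F -> P m F) ->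
  exists F0, forall F, F0 <= F -> forall m, m < n -> P m F.
Proof.
  induction n; intros H. exists 0; intros; lia.
  destruct IHn as [F1 HF1]. intros; apply H; lia.
  destruct (H n) as [F2 HF2]. lia.
  exists (F1 + F2). intros F HF m Hm. destruct (Nat.eq_dec m n). subst; apply HF2; lia. apply HF1; lia.
Qed.

Fixpoint evalc_complete (e : recf) (xs : list nat) (y : nat) (H : eval e xs y) {struct H} :
  exists F0, forall F, F0 <= F -> evalc e F xs = S y
with evalcl_complete (gs : list recf) (xs ys : list nat) (H : eval_list gs xs ys) {struct H} :
  exists F0, forall F, F0 <= F -> map (fun g => evalc g F xs) gs = map S ys.
Proof.
  - destruct H as [xs|x xs|i xs|f gs xs ys y H H0|f g xs y H|f g n xs r y H H0|f xs n H e].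
    + exists 0; reflexivity.
    + exists 0; reflexivity.
    + exists 0; reflexivity.
    + destruct (evalcl_complete _ _ _ H) as [F1 H1].
      destruct (evalc_complete _ _ _ H0) as [F2 H2].
      exists (F1 + F2). intros F HF. simpl. rewrite H1 by lia. rewrite allnz_map.
      replace (map (fun g => pred (evalc g F xs)) gs) with ys. apply H2; lia.
      rewrite <- (map_map (fun g => evalc g F xs) pred). rewrite H1 by lia. rewrite map_map. simpl. symmetry; apply map_id.
    + destruct (evalc_complete _ _ _ H) as [F1 H1]. exists F1. intros. simpl. auto.
    + destruct (evalc_complete _ _ _ H) as [F1 H1].
      destruct (evalc_complete _ _ _ H0) as [F2 H2].
      exists (F1 + F2). intros F HF. simpl. specialize (H1 F ltac:(lia)). simpl in H1.
      rewrite H1. simpl. apply H2; lia.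
    + destruct (evalc_complete _ _ _ H) as [F1 H1].
      assert (Hb : exists F0, forall F, F0 <= F -> forall m, m < n -> exists k, evalc f F (m :: xs) = S (S k)).
      { apply fuel_bound. intros m Hm. destruct (e m Hm) as [k Hk].
        destruct (evalc_complete _ _ _ Hk) as [F3 H3]. exists F3. intros. exists k. auto. }
      destruct Hb as [F2 H2].
      exists (F1 + F2 + S n). intros F HF. simpl.
      destruct (ff_spec F (fun t => enc2 t (evalc f F (t :: xs)))) as [[H5 H6]|[t [H5 [H6 [H7 H8]]]]].
      * exfalso. specialize (H6 n ltac:(lia)). simpl in H6. rewrite H1 in H6 by lia. discriminate.
      * rewrite H6. simpl in *.
        destruct (Nat.lt_trichotomy t n) as [Hlt|[Heq|Hgt]].
        -- exfalso. destruct (H2 F ltac:(lia) t Hlt) as [k Hk]. rewrite Hk in H7. apply H7. reflexivity.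
        -- subst. rewrite H1 by lia. reflexivity.
        -- exfalso. specialize (H8 n Hgt). rewrite H1 in H8 by lia. discriminate.
  - destruct H.
    + exists 0; reflexivity.
    + destruct (evalc_complete _ _ _ H) as [F1 H1].
      destruct (evalcl_complete _ _ _ H0) as [F2 H2].
      exists (F1 + F2). intros F HF. simpl. rewrite H1, H2 by lia. reflexivity.
Qed.

Fixpoint eval_det (e : recf) (xs : list nat) (y : nat) (H : eval e xs y) {struct H} :
  forall y', eval e xs y' -> y = y'
with evall_det (gs : list recf) (xs ys : list nat) (H : eval_list gs xs ys) {struct H} :
  forall ys', eval_list gs xs ys' -> ys = ys'.
Proof.
  - destruct H as [xs|x xs|i xs|f gs xs ys y H H0|f g xs y H|f g n xs r y H H0|f xs n H e];
      intros y' H'; inversion H'; subst; auto.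
    + assert (ys = ys0) by (eapply evall_det; eauto). subst. eapply eval_det; eauto.
    + eapply eval_det; eauto.
    + assert (r = r0) by (eapply eval_det; eauto). subst. eapply eval_det; eauto.
    + destruct (Nat.lt_trichotomy n y') as [Hl|[Heq|Hg]]; auto.
      * destruct (H2 n Hl) as [k Hk]. apply eval_det with (y' := S k) in H. discriminate. exact Hk.
      * destruct (e y' Hg) as [k Hk]. apply eval_det with (y' := 0) in Hk. discriminate. exact H1.
  - destruct H as [xs|g gs xs y ys H H0]; intros ys' H'; inversion H'; subst; auto.
    f_equal. eapply eval_det; eauto. eapply evall_det; eauto.
Qed.

Definition tri n := loopf n 0 (fun t acc => S (acc + t)).
Definition cnt B (f : nat -> nat) := loopf B 0 (fun t acc => acc + f t).

Definition Sg x := Sub (K 1) (IsZ x).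
Definition Tri x := EApp (ELoop (EV 0) EZ (ES (Add (EV 1) (EV 0)))) (el [x]).
Definition Npair a b := EApp (Add (Tri (Add (EV 0) (EV 1))) (EV 1)) (el [a;b]).
Definition Sfun z := EApp (ELoop (EV 0) EZ (Add (EV 1) (Le (Tri (ES (EV 0))) (EV 2)))) (el [z]).
Definition Sndp z := EApp (Sub (EV 0) (Tri (Sfun (EV 0)))) (el [z]).
Definition Fstp z := EApp (Sub (Sfun (EV 0)) (Sndp (EV 0))) (el [z]).
Definition Hdc c := Fstp (Pred c).
Definition Tlc c := Sndp (Pred c).
Definition Itl c i := EApp (ELoop (EV 1) (EV 0) (Tlc (EV 1))) (el [c; i]).
Definition Nthc c i := Hdc (Itl c i).
Definition Lenc c := EApp (ELoop (EV 0) EZ (Add (EV 1) (Sg (Itl (EV 2) (EV 0))))) (el [c]).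
Definition Half x := EApp (ELoop (EV 0) EZ (Sub (EV 0) (EV 1))) (el [x]).
Definition Par x := EApp (Sub (EV 0) (Add (Half (EV 0)) (Half (EV 0)))) (el [x]).
Definition Bit i j := Par (EApp (ELoop (EV 0) (EV 1) (Half (EV 1))) (el [i; j])).
Definition Pow2 L := EApp (ELoop (EV 0) (K 1) (Add (EV 1) (EV 1))) (el [L]).
Definition Elem c j t := EApp (If (Par (EV 2)) (Bit (Half (EV 2)) (EV 1)) (Nthc (EV 0) (Half (EV 2)))) (el [c; j; t]).
Definition CP c j k := EApp (ELoop (EV 2) EZ (ES (Npair (Elem (EV 2) (EV 3) (Sub (Sub (EV 4) (EV 0)) (K 1))) (EV 1)))) (el [c;j;k]).

Arguments Sg : simpl never. Arguments Tri : simpl never. Arguments Npair : simpl never.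
Arguments Sfun : simpl never. Arguments Sndp : simpl never. Arguments Fstp : simpl never.
Arguments Hdc : simpl never. Arguments Tlc : simpl never. Arguments Itl : simpl never.
Arguments Nthc : simpl never. Arguments Lenc : simpl never. Arguments Half : simpl never.
Arguments Par : simpl never. Arguments Bit : simpl never. Arguments Pow2 : simpl never.
Arguments Elem : simpl never. Arguments CP : simpl never.


Definition sfun z := cnt z (fun u => if tri (S u) <=? z then 1 else 0).
Definition sndp z := z - tri (sfun z).
Definition fstp z := sfun z - sndp z.
Definition hdc c := fstp (pred c).
Definition tlc c := sndp (pred c).
Definition nthc c i := hdc (Nat.iter i tlc c).
Definition lenc c := cnt c (fun t => if Nat.iter t tlc c =? 0 then 0 else 1).
Definition par x := x - (Nat.div2 x + Nat.div2 x).
Definition bitf i j := par (Nat.iter i Nat.div2 j).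
Definition elemf c j t := if par t =? 0 then nthc c (Nat.div2 t) else bitf (Nat.div2 t) j.
Definition cp c j k := loopf k 0 (fun t acc => S (npair (elemf c j (k - t - 1)) acc)).

Ltac cs2 := cbn -[Pred Add Sub Mul IsZ If Le FF Sg Tri Npair Sfun Sndp Fstp Hdc Tlc Itl Nthc Lenc Half Par Bit Pow2 Elem CP tri cnt npair sfun sndp fstp hdc tlc nthc lenc par bitf elemf cp] in *.

Lemma loopf_iter n x f : loopf n x (fun _ acc => f acc) = Nat.iter n f x.
Proof. induction n; simpl; congruence. Qed.

Lemma sem_Sg env x : sem env (Sg x) = if sem env x =? 0 then 0 else 1.
Proof. unfold Sg. rewrite sem_Sub, sem_K, sem_IsZ. destruct (sem env x); reflexivity. Qed.
Lemma sem_Tri env x : sem env (Tri x) = tri (sem env x).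
Proof. unfold Tri. cs2. unfold tri. apply loopf_ext. intros. rewrite sem_Add. reflexivity. Qed.

Lemma tri_div s : tri s = s * (s + 1) / 2.
Proof.
  assert (H: 2 * tri s = s * (s+1)). { unfold tri. induction s; simpl in *; lia. }
  rewrite <- H. rewrite Nat.mul_comm. rewrite Nat.div_mul; lia.
Qed.
Lemma npair_tri a b : npair a b = tri (a + b) + b.
Proof. unfold npair. rewrite tri_div. reflexivity. Qed.

Lemma sem_Npair env a b : sem env (Npair a b) = npair (sem env a) (sem env b).
Proof. unfold Npair. cs2. rewrite sem_Add, sem_Tri, sem_Add. cs2. rewrite npair_tri. reflexivity. Qed.
Lemma sem_Sfun env z : sem env (Sfun z) = sfun (sem env z).
Proof. unfold Sfun. cs2. unfold sfun, cnt. apply loopf_ext. intros. rewrite sem_Add, sem_Le, sem_Tri. reflexivity. Qed.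
Lemma sem_Sndp env z : sem env (Sndp z) = sndp (sem env z).
Proof. unfold Sndp. cs2. rewrite sem_Sub, sem_Tri, sem_Sfun. reflexivity. Qed.
Lemma sem_Fstp env z : sem env (Fstp z) = fstp (sem env z).
Proof. unfold Fstp. cs2. rewrite sem_Sub, sem_Sndp, sem_Sfun. reflexivity. Qed.
Lemma sem_Hdc env c : sem env (Hdc c) = hdc (sem env c).
Proof. unfold Hdc. rewrite sem_Fstp, sem_Pred. reflexivity. Qed.
Lemma sem_Tlc env c : sem env (Tlc c) = tlc (sem env c).
Proof. unfold Tlc. rewrite sem_Sndp, sem_Pred. reflexivity. Qed.
Lemma sem_Itl env c i : sem env (Itl c i) = Nat.iter (sem env i) tlc (sem env c).
Proof. unfold Itl. cs2. rewrite <- loopf_iter. apply loopf_ext. intros. rewrite sem_Tlc. reflexivity. Qed.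
Lemma sem_Nthc env c i : sem env (Nthc c i) = nthc (sem env c) (sem env i).
Proof. unfold Nthc. rewrite sem_Hdc, sem_Itl. reflexivity. Qed.
Lemma sem_Lenc env c : sem env (Lenc c) = lenc (sem env c).
Proof. unfold Lenc. cs2. unfold lenc, cnt. apply loopf_ext. intros. rewrite sem_Add, sem_Sg, sem_Itl. reflexivity. Qed.
Lemma div2_loop x : loopf x 0 (fun t acc => t - acc) = Nat.div2 x.
Proof.
  induction x; simpl. reflexivity. rewrite IHx.
  pose proof (Nat.div2_odd x). destruct (Nat.odd x); simpl in H;
  pose proof (Nat.div2_odd (S x)); rewrite Nat.odd_succ in H0;
  rewrite <- Nat.negb_odd in H0; destruct (Nat.odd x) eqn:E; simpl in H0; try discriminate; lia.
Qed.
Lemma sem_Half env x : sem env (Half x) = Nat.div2 (sem env x).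
Proof. unfold Half. cs2. rewrite <- div2_loop. apply loopf_ext. intros. rewrite sem_Sub. reflexivity. Qed.
Lemma sem_Par env x : sem env (Par x) = par (sem env x).
Proof. unfold Par. cs2. rewrite sem_Sub, sem_Add, !sem_Half. reflexivity. Qed.
Lemma sem_Bit env i j : sem env (Bit i j) = bitf (sem env i) (sem env j).
Proof. unfold Bit. rewrite sem_Par. cs2. unfold bitf. f_equal. rewrite <- loopf_iter.
  apply loopf_ext. intros. rewrite sem_Half. reflexivity. Qed.
Lemma sem_Pow2 env L : sem env (Pow2 L) = 2 ^ (sem env L).
Proof. unfold Pow2. cs2. rewrite (loopf_ext _ _ _ (fun _ acc => acc + acc)) by (intros; rewrite sem_Add; reflexivity). generalize (sem env L). induction n; simpl. reflexivity. rewrite IHn. lia. Qed.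
Lemma sem_Elem env c j t : sem env (Elem c j t) = elemf (sem env c) (sem env j) (sem env t).
Proof. unfold Elem. cs2. rewrite sem_If, sem_Par, sem_Bit, sem_Nthc, !sem_Half. reflexivity. Qed.
Lemma sem_CP env c j k : sem env (CP c j k) = cp (sem env c) (sem env j) (sem env k).
Proof. unfold CP. cs2. unfold cp. apply loopf_ext. intros. rewrite sem_Npair, sem_Elem, !sem_Sub. cs2.
  reflexivity. Qed.

Lemma tri_S n : tri (S n) = tri n + n + 1.
Proof. unfold tri. simpl. lia. Qed.
Lemma tri_mono a b : a <= b -> tri a <= tri b.
Proof. induction 1; auto. rewrite tri_S. lia. Qed.
Lemma tri_ge n : n <= tri n.
Proof. induction n. unfold tri; simpl; lia. rewrite tri_S. lia. Qed.

Lemma cnt_ext B f g : (forall t, t < B -> f t = g t) -> cnt B f = cnt B g.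
Proof. unfold cnt. induction B; simpl; intros; auto. rewrite IHB by auto. rewrite H by lia. auto. Qed.
Lemma cnt_lt B s : cnt B (fun u => if u <? s then 1 else 0) = Nat.min B s.
Proof. unfold cnt. induction B; cbn [loopf]. lia. rewrite IHB. destruct (Nat.ltb_spec B s); lia. Qed.

Lemma sfun_npair a b : sfun (npair a b) = a + b.
Proof.
  unfold sfun. rewrite npair_tri.
  rewrite (cnt_ext _ _ (fun u => if u <? a + b then 1 else 0)).
  - rewrite cnt_lt. pose proof (tri_ge (a+b)). lia.
  - intros u _. destruct (Nat.ltb_spec u (a+b)).
    + replace (tri (S u) <=? tri (a + b) + b) with true; auto. symmetry. apply Nat.leb_le. pose proof (tri_mono (S u) (a+b)). lia.
    + replace (tri (S u) <=? tri (a + b) + b) with false; auto. symmetry. apply Nat.leb_gt. pose proof (tri_mono (S (a+b)) (S u)). rewrite tri_S in H0. lia.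
Qed.
Lemma sndp_npair a b : sndp (npair a b) = b.
Proof. unfold sndp. rewrite sfun_npair, npair_tri. lia. Qed.
Lemma fstp_npair a b : fstp (npair a b) = a.
Proof. unfold fstp. rewrite sfun_npair, sndp_npair. lia. Qed.

Lemma hdc_cons x l : hdc (code (x :: l)) = x.
Proof. unfold hdc. simpl. apply fstp_npair. Qed.
Lemma tlc_cons x l : tlc (code (x :: l)) = code l.
Proof. unfold tlc. simpl. apply sndp_npair. Qed.
Lemma tlc0 : tlc 0 = 0. Proof. reflexivity. Qed.
Lemma hdc0 : hdc 0 = 0. Proof. reflexivity. Qed.

Lemma iter_tlc_code l i : Nat.iter i tlc (code l) = code (skipn i l).
Proof.
  revert l. induction i; intros l. reflexivity. rewrite Nat.iter_succ, IHi.
  destruct (le_lt_dec (length l) i).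
  - rewrite !skipn_all2 by lia. reflexivity.
  - assert (skipn (S i) l = skipn 1 (skipn i l)) by (rewrite skipn_skipn; f_equal; lia).
    rewrite H.
    destruct (skipn i l) eqn:E. { apply (f_equal (@length nat)) in E. rewrite length_skipn in E. simpl in E. lia. }
    rewrite tlc_cons. reflexivity.
Qed.

Lemma nthc_code l i : nthc (code l) i = nth i l 0.
Proof.
  unfold nthc. rewrite iter_tlc_code. destruct (skipn i l) eqn:E.
  - simpl. rewrite nth_overflow; auto. apply (f_equal (@length nat)) in E. rewrite length_skipn in E. simpl in E. lia.
  - rewrite hdc_cons. rewrite <- (firstn_skipn i l). rewrite E. rewrite app_nth2; rewrite length_firstn.
    + destruct (le_lt_dec i (length l)).
      * replace (i - Nat.min i (length l)) with 0 by lia. reflexivity.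
      * rewrite skipn_all2 in E by lia. discriminate.
    + destruct (le_lt_dec i (length l)). lia. rewrite skipn_all2 in E by lia. discriminate.
Qed.

Lemma npair_ge a b : b <= npair a b.
Proof. rewrite npair_tri. lia. Qed.
Lemma code_ge l : length l <= code l.
Proof. induction l; simpl. lia. pose proof (npair_ge a (code l)). lia. Qed.

Lemma lenc_code l : lenc (code l) = length l.
Proof.
  unfold lenc. rewrite (cnt_ext _ _ (fun u => if u <? length l then 1 else 0)).
  - rewrite cnt_lt. pose proof (code_ge l). lia.
  - intros t _. rewrite iter_tlc_code. destruct (Nat.ltb_spec t (length l)).
    + destruct (skipn t l) eqn:E. apply (f_equal (@length nat)) in E. rewrite length_skipn in E. simpl in E. lia.
      reflexivity.
    + rewrite skipn_all2 by lia. reflexivity.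
Qed.

Lemma par_spec x : par x = if Nat.odd x then 1 else 0.
Proof. unfold par. pose proof (Nat.div2_odd x). destruct (Nat.odd x); simpl in H; lia. Qed.

Lemma cp_code c j k : cp c j k = code (map (elemf c j) (seq 0 k)).
Proof.
  unfold cp.
  assert (H: forall t, t <= k -> loopf t 0 (fun t acc => S (npair (elemf c j (k - t - 1)) acc)) = code (map (elemf c j) (seq (k - t) t))).
  { induction t; intros Ht. reflexivity. simpl. rewrite IHt by lia.
    replace (k - S t) with (k - t - 1) by lia.
    replace (k - t) with (S (k - t - 1)) at 2 by lia.
    replace (seq (k - t - 1) (S t)) with ((k - t - 1) :: seq (k - t) t).
    reflexivity. simpl. f_equal. f_equal. lia. }
  rewrite H by lia. replace (k - k) with 0 by lia. reflexivity.
Qed.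

Section Main.
Variables (eH e1 e2 : recf) (U1 U2 : list nat -> nat).

Definition hitf c n s L j := ff (S (L+L)) (fun k => evalc eH s [npair (n+5) (cp c j k)] - 1).
Definition closef a b kk := if U1 [a;b;kk] * 2^kk <=? 3 * S (U2 [a;b;kk]) then 1 else 0.
Definition countf c n s L j := cnt (2^L) (fun i => if hitf c n s L i =? 0 then 0
   else closef (pred (hitf c n s L i)) (pred (hitf c n s L j)) (n+4)).
Definition testf c n s L j := if hitf c n s L j =? 0 then 0 else
   if S (2^L) <=? countf c n s L j + countf c n s L j then hitf c n s L j else 0.
Definition stagef c n s := ff (S s) (fun L => ff (2^L) (fun j => testf c n s L j)).
Definition mainf z := ff (lenc (sndp z)) (fun s => stagef (sndp z) (fstp z) s).

Definition Hit c n s L j := EApp (FF (ES (Add (EV 3) (EV 3)))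
   (Sub (EApp (clockE eH 1) (el [EV 4; Npair (Add (EV 3) (K 5)) (CP (EV 2) (EV 6) (EV 0))])) (K 1))) (el [c;n;s;L;j]).
Definition Close a b kk := EApp (Le (Mul (EExt e1 U1 (el [EV 0; EV 1; EV 2])) (Pow2 (EV 2)))
    (Mul (K 3) (ES (EExt e2 U2 (el [EV 0;EV 1;EV 2]))))) (el [a;b;kk]).
Definition Count c n s L j := EApp (ELoop (Pow2 (EV 3)) EZ (Add (EV 1)
   (If (Hit (EV 2) (EV 3) (EV 4) (EV 5) (EV 0))
       (Close (Pred (Hit (EV 2) (EV 3) (EV 4) (EV 5) (EV 0))) (Pred (Hit (EV 2) (EV 3) (EV 4) (EV 5) (EV 6))) (Add (EV 3) (K 4)))
       EZ))) (el [c;n;s;L;j]).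
Definition Test c n s L j := EApp (If (Hit (EV 0) (EV 1) (EV 2) (EV 3) (EV 4))
   (If (Le (ES (Pow2 (EV 3))) (Add (Count (EV 0) (EV 1) (EV 2) (EV 3) (EV 4)) (Count (EV 0) (EV 1) (EV 2) (EV 3) (EV 4))))
       (Hit (EV 0) (EV 1) (EV 2) (EV 3) (EV 4)) EZ) EZ) (el [c;n;s;L;j]).
Definition Stage c n s := EApp (FF (ES (EV 2)) (FF (Pow2 (EV 0)) (Test (EV 4) (EV 5) (EV 6) (EV 2) (EV 0)))) (el [c;n;s]).
Definition Main := EApp (FF (Lenc (EV 0)) (Stage (EV 2) (EV 3) (EV 0))) (el [Sndp (EV 0); Fstp (EV 0)]).

Arguments Hit : simpl never. Arguments Close : simpl never. Arguments Count : simpl never.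
Arguments Test : simpl never. Arguments Stage : simpl never.

Ltac cs3 := cbn -[Pred Add Sub Mul IsZ If Le FF Sg Tri Npair Sfun Sndp Fstp Hdc Tlc Itl Nthc Lenc Half Par Bit Pow2 Elem CP tri cnt npair sfun sndp fstp hdc tlc nthc lenc par bitf elemf cp
  Hit Close Count Test Stage hitf closef countf testf stagef mainf evalc clockE] in *.

Ltac cm := cbn [sem seml el nth] in *.

Lemma sem_Hit env c n s L j : sem env (Hit c n s L j) = hitf (sem env c) (sem env n) (sem env s) (sem env L) (sem env j).
Proof. unfold Hit. cm. rewrite sem_FF. cm. rewrite sem_Add. cm. unfold hitf. apply ff_ext. intros k _.
  rewrite sem_Sub, sem_K. cm. rewrite clock_sem by reflexivity. cm. rewrite sem_Npair, sem_Add, sem_K, sem_CP. cm.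
  reflexivity. Qed.

Lemma sem_Close env a b kk : sem env (Close a b kk) = closef (sem env a) (sem env b) (sem env kk).
Proof. unfold Close. cm. rewrite sem_Le, !sem_Mul, sem_Pow2, sem_K. cm. unfold closef. reflexivity. Qed.

Lemma sem_Count env c n s L j : sem env (Count c n s L j) = countf (sem env c) (sem env n) (sem env s) (sem env L) (sem env j).
Proof. unfold Count. cm. rewrite sem_Pow2. cm. unfold countf, cnt. apply loopf_ext. intros t acc.
  rewrite sem_Add, sem_If. cm. rewrite sem_Close, !sem_Pred, !sem_Hit, sem_Add, sem_K. cm. reflexivity. Qed.

Lemma sem_Test env c n s L j : sem env (Test c n s L j) = testf (sem env c) (sem env n) (sem env s) (sem env L) (sem env j).
Proof. unfold Test. cm. rewrite !sem_If, sem_Le, sem_Add, !sem_Count, !sem_Hit. cm. rewrite sem_Pow2. cm.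
  unfold testf. destruct (hitf _ _ _ _ _ =? 0); auto. destruct (S _ <=? _); reflexivity. Qed.

Lemma sem_Stage env c n s : sem env (Stage c n s) = stagef (sem env c) (sem env n) (sem env s).
Proof. unfold Stage. cm. rewrite sem_FF. cm. unfold stagef. apply ff_ext. intros L _.
  rewrite sem_FF, sem_Pow2. cm. apply ff_ext. intros j _. rewrite sem_Test. reflexivity. Qed.

Lemma sem_Main z : sem [z] Main = mainf z.
Proof. unfold Main. cm. rewrite sem_FF, sem_Lenc, sem_Sndp, sem_Fstp. cm. unfold mainf. apply ff_ext.
  intros s _. rewrite sem_Stage. reflexivity. Qed.

Hypothesis HU1 : forall l, length l = 3 -> eval e1 l (U1 l).
Hypothesis HU2 : forall l, length l = 3 -> eval e2 l (U2 l).

Lemma wf_Main : wf Main.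
Proof.
  unfold Main, Stage, Test, Count, Close, Hit, FF, Lenc, Sndp, Fstp, Sfun, Tri, Le, IsZ, Sub, Add, Mul, Pred, If, Pow2, Sg, Itl, Tlc,
    Npair, CP, Elem, Par, Half, Bit, Nthc, Hdc.
  simpl. repeat split; auto using wf_clock.
Qed.

Lemma main_eval z : eval (comp 1 Main) [z] (mainf z).
Proof. rewrite <- sem_Main. apply comp_correct. reflexivity. apply wf_Main. Qed.
End Main.

Definition wordb (j L : nat) : list bool := map (fun i => bitf i j =? 1) (seq 0 L).

Lemma bitf_S i j : bitf (S i) j = bitf i (Nat.div2 j).
Proof. unfold bitf. rewrite Nat.iter_succ_r. reflexivity. Qed.
Lemma bitf_01 i j : bitf i j = 0 \/ bitf i j = 1.
Proof. unfold bitf. rewrite par_spec. destruct (Nat.odd _); auto. Qed.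
Lemma nth_map_seq {A} (f : nat -> A) i L d : i < L -> nth i (map f (seq 0 L)) d = f i.
Proof. intros H. rewrite nth_indep with (d' := f 0) by (rewrite length_map, length_seq; lia).
  rewrite map_nth, seq_nth by lia. reflexivity. Qed.
Lemma bitf_bit i j L : i < L -> bitf i j = bit (nth i (wordb j L) false).
Proof. intros H. unfold wordb. rewrite nth_map_seq by lia. destruct (bitf_01 i j) as [E|E]; rewrite E; reflexivity. Qed.
Lemma wordb_len j L : length (wordb j L) = L.
Proof. unfold wordb. rewrite length_map, length_seq. reflexivity. Qed.

Lemma wordb_surj (w : list bool) : exists j, j < 2 ^ (length w) /\ wordb j (length w) = w.
Proof.
  induction w as [|b w IH]. exists 0. split. simpl; lia. reflexivity.
  destruct IH as [j' [Hj Hw]]. exists (bit b + 2 * j'). split.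
  - simpl. destruct b; simpl; lia.
  - unfold wordb. simpl length. cbn [seq map]. rewrite <- seq_shift. f_equal.
    + unfold bitf. cbn [Nat.iter nat_rect]. rewrite par_spec. destruct b; cbn [bit].
      * rewrite Nat.odd_add_mul_2. reflexivity.
      * rewrite Nat.odd_add_mul_2. reflexivity.
    + rewrite map_map. transitivity (wordb j' (length w)); [|exact Hw]. unfold wordb. apply map_ext. intros i. rewrite bitf_S. f_equal. f_equal.
      destruct b; simpl.
      * replace (S (j' + (j' + 0))) with (S (2 * j')) by lia. apply Nat.div2_succ_double.
      * replace (j' + (j' + 0)) with (2 * j') by lia. apply Nat.div2_double.
Qed.

Lemma cnt_S B f : cnt (S B) f = cnt B f + f B.
Proof. reflexivity. Qed.
Lemma cnt_add B f g : cnt B (fun i => f i + g i) = cnt B f + cnt B g.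
Proof. induction B. reflexivity. rewrite !cnt_S, IHB. lia. Qed.
Lemma cnt_le B f g : (forall i, i < B -> f i <= g i) -> cnt B f <= cnt B g.
Proof. induction B; intros H. reflexivity. rewrite !cnt_S. pose proof (H B ltac:(lia)). assert (cnt B f <= cnt B g) by (apply IHB; intros; apply H; lia). lia. Qed.
Lemma cnt_pos B f : 0 < cnt B f -> exists i, i < B /\ f i <> 0.
Proof. induction B; intros H. unfold cnt in H; simpl in H; lia. rewrite cnt_S in H.
  destruct (f B) eqn:E. destruct IHB as [i [? ?]]. lia. exists i; split; auto. exists B; split; [lia|lia]. Qed.
Lemma cnt_const1 B : cnt B (fun _ => 1) = B.
Proof. induction B. reflexivity. rewrite cnt_S, IHB. lia. Qed.
Lemma cnt_mono_B B B' f : B <= B' -> cnt B f <= cnt B' f.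
Proof. induction 1. lia. rewrite cnt_S. lia. Qed.

Definition ind (b : bool) := if b then 1 else 0.

Section Measure.
Variable T : tree.
Variable r : R.
Hypothesis Hr : (/ 2 < r)%R.
Hypothesis Hm : measure_ge (paths T) r.

Lemma sum_cnt (B : nat -> bool) L N :
  sum_f_R0 (fun i => match (if andb (i <? 2 ^ L) (B i) then Some (wordb i L) else None) with
                     | Some w => (/2) ^ (length w) | None => 0 end)%R N
  = (INR (cnt (Nat.min (S N) (2 ^ L)) (fun j => ind (B j))) * (/2) ^ L)%R.
Proof.
  induction N.
  - pose proof (Nat.pow_nonzero 2 L).
    replace (Nat.min 1 (2 ^ L)) with 1 by lia.
    assert (E: (0 <? 2 ^ L) = true) by (apply Nat.ltb_lt; lia).
    simpl. rewrite E. unfold ind. unfold cnt; simpl; destruct (B 0); simpl; rewrite ?wordb_len; lra.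
  - simpl sum_f_R0. rewrite IHN. destruct (S N <? 2 ^ L) eqn:E.
    + apply Nat.ltb_lt in E. replace (Nat.min (S (S N)) (2 ^ L)) with (S (Nat.min (S N) (2 ^ L))) by lia.
      rewrite cnt_S. replace (Nat.min (S N) (2 ^ L)) with (S N) by lia. rewrite plus_INR. unfold ind.
      simpl andb. destruct (B (S N)); rewrite ?wordb_len; simpl; lra.
    + apply Nat.ltb_ge in E. replace (Nat.min (S (S N)) (2 ^ L)) with (Nat.min (S N) (2 ^ L)) by lia.
      simpl andb. lra.
Qed.

Lemma ML (B : nat -> bool) L :
  (forall q, paths T q -> exists j, j < 2 ^ L /\ B j = true /\ prefix q L = wordb j L) ->
  2 ^ L < 2 * cnt (2 ^ L) (fun j => ind (B j)).
Proof.
  intros Hc.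
  set (c := fun i => if andb (i <? 2 ^ L) (B i) then Some (wordb i L) else None).
  assert (Hcov : cyl_covers c (paths T)).
  { intros q Hq. destruct (Hc q Hq) as [j [Hj [HB Hp]]]. exists j, (wordb j L). split.
    unfold c. apply Nat.ltb_lt in Hj. rewrite Hj, HB. reflexivity. rewrite wordb_len. exact Hp. }
  destruct (Hm c Hcov (/2)%R Hr) as [N HN].
  unfold cover_weight in HN. unfold c in HN. rewrite sum_cnt in HN.
  assert (Hle : cnt (Nat.min (S N) (2 ^ L)) (fun j => ind (B j)) <= cnt (2 ^ L) (fun j => ind (B j))).
  { apply cnt_mono_B. lia. }
  apply le_INR in Hle.
  assert (Hp : (0 < (/2) ^ L)%R) by (apply pow_lt; lra).
  assert (H2 : ((/2) ^ L * INR (2 ^ L) = 1)%R).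
  { rewrite pow_INR. rewrite <- Rpow_mult_distr. replace (/2 * INR 2)%R with 1%R by (simpl; lra). apply pow1. }
  assert (H3 : (INR (2 ^ L) < 2 * INR (cnt (2 ^ L) (fun j => ind (B j))))%R).
  { apply Rmult_lt_reg_l with ((/2) ^ L)%R. exact Hp.
    rewrite H2. nra. }
  apply INR_lt. rewrite mult_INR. simpl (INR 2). lra.
Qed.

Lemma ML_contra (B : nat -> bool) L :
  2 ^ L < 2 * cnt (2 ^ L) (fun j => ind (B j)) ->
  exists j q, j < 2 ^ L /\ B j = true /\ paths T q /\ prefix q L = wordb j L.
Proof.
  intros Hlt. apply Classical_Prop.NNPP. intros Hn.
  assert (H := ML (fun j => negb (B j)) L).
  assert (Hall : 2 ^ L < 2 * cnt (2 ^ L) (fun j => ind (negb (B j)))).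
  { apply H. intros q Hq.
    destruct (wordb_surj (prefix q L)) as [j [Hj Hw]]. unfold prefix in Hj, Hw at 1.
    rewrite length_map, length_seq in Hj, Hw. exists j. repeat split; auto.
    destruct (B j) eqn:E; auto. exfalso. apply Hn. exists j, q. auto. }
  assert (Hsum : cnt (2 ^ L) (fun j => ind (B j)) + cnt (2 ^ L) (fun j => ind (negb (B j))) = 2 ^ L).
  { rewrite <- cnt_add. transitivity (cnt (2 ^ L) (fun _ => 1)); [|apply cnt_const1]. apply cnt_ext. intros. unfold ind; destruct (B t); reflexivity. }
  lia.
Qed.
End Measure.

Lemma prefix_len {A} (q : nat -> A) n : length (prefix q n) = n.
Proof. unfold prefix. rewrite length_map, length_seq. reflexivity. Qed.
Lemma prefix_nth {A} (q : nat -> A) n i d : i < n -> nth i (prefix q n) d = q i.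
Proof. intros. unfold prefix. apply nth_map_seq. auto. Qed.
Lemma prefix_S {A} (q : nat -> A) n : prefix q (S n) = prefix q n ++ [q n].
Proof. unfold prefix. rewrite seq_S, map_app. reflexivity. Qed.
Lemma list_eq_nth {A} (l1 l2 : list A) d : length l1 = length l2 ->
  (forall i, i < length l1 -> nth i l1 d = nth i l2 d) -> l1 = l2.
Proof.
  revert l2. induction l1; destruct l2; simpl; intros; try discriminate; auto.
  f_equal. apply (H0 0); lia. apply IHl1. lia. intros. apply (H0 (S i)). lia.
Qed.
Lemma prefix_ext {A} (q q' : nat -> A) n : (forall i, i < n -> q i = q' i) -> prefix q n = prefix q' n.
Proof. intros. unfold prefix. apply map_ext_in. intros. apply in_seq in H0. apply H. lia. Qed.
Lemma prefix_agree {A} (q q' : nat -> A) n (d : A) : prefix q n = prefix q' n -> forall i, i < n -> q i = q' i.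
Proof. intros. rewrite <- (prefix_nth q n i d), <- (prefix_nth q' n i d) by auto. congruence. Qed.

Section Konig.
Variable T : tree.
Variable good : (nat -> bool) -> nat -> Prop.
Hypothesis Hmono : forall q L L', good q L -> L <= L' -> good q L'.
Hypothesis Hloc : forall q q' L, (forall i, i < L -> q i = q' i) -> good q L -> good q' L.
Hypothesis Hall : forall q, paths T q -> exists L, good q L.

Definition Bad (w : list bool) := forall L, exists q, paths T q /\ prefix q (length w) = w /\ ~ good q L.

Lemma bad_step w : Bad w -> Bad (w ++ [true]) \/ Bad (w ++ [false]).
Proof.
  intros Hb. apply NNPP. intros Hn. apply not_or_and in Hn. destruct Hn as [H1 H0].
  unfold Bad in H1, H0. apply not_all_ex_not in H1. apply not_all_ex_not in H0.
  destruct H1 as [L1 H1]. destruct H0 as [L0 H0].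
  destruct (Hb (L0 + L1)) as [q [Hq [Hp Hng]]]. apply Hng.
  assert (Hpre : forall b, q (length w) = b -> prefix q (length (w ++ [b])) = w ++ [b]).
  { intros b Eb. rewrite length_app. simpl. rewrite Nat.add_1_r, prefix_S, Hp, Eb. reflexivity. }
  destruct (q (length w)) eqn:E.
  - apply Hmono with L1; [|lia]. apply NNPP. intros Hg. apply H1. exists q. auto.
  - apply Hmono with L0; [|lia]. apply NNPP. intros Hg. apply H0. exists q. auto.
Qed.

Lemma konig : exists L, forall q, paths T q -> good q L.
Proof.
  apply NNPP. intros Hn.
  assert (Hb0 : Bad []).
  { intros L. apply NNPP. intros H1. apply Hn. exists L. intros q Hq. apply NNPP. intros Hg. apply H1.
    exists q. repeat split; auto. }
  set (step := fun w => if excluded_middle_informative (Bad (w ++ [true])) then w ++ [true] else w ++ [false]).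
  set (wd := fix wd n := match n with 0 => [] | S n => step (wd n) end).
  assert (Hbad : forall n, Bad (wd n)).
  { induction n. exact Hb0. simpl. unfold step. destruct (excluded_middle_informative _); auto.
    destruct (bad_step _ IHn); tauto. }
  assert (Hlen : forall n, length (wd n) = n).
  { induction n. reflexivity. simpl. unfold step. destruct (excluded_middle_informative _); rewrite length_app; simpl; lia. }
  assert (Hext : forall n i, i < n -> nth i (wd n) false = nth i (wd (S n)) false).
  { intros n i Hi. simpl. unfold step. destruct (excluded_middle_informative _); rewrite app_nth1; auto; rewrite Hlen; auto. }
  assert (Hext2 : forall n m i, i < n -> nth i (wd n) false = nth i (wd (m + n)) false).
  { intros n m i Hi. induction m. reflexivity. rewrite IHm. apply Hext. lia. }
  set (qi := fun i => nth i (wd (S i)) false).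
  assert (Hpq : forall n, prefix qi n = wd n).
  { intros n. apply list_eq_nth with false. rewrite prefix_len, Hlen. auto.
    intros i Hi. rewrite prefix_len in Hi. rewrite prefix_nth by auto. unfold qi.
    replace n with ((n - S i) + S i) by lia. rewrite <- Hext2 by lia. reflexivity. }
  assert (HT : paths T qi).
  { intros n. destruct (Hbad n 0) as [q [Hq [Hp _]]]. rewrite Hpq. rewrite Hlen in Hp. rewrite <- Hp. apply Hq. }
  destruct (Hall qi HT) as [L HL].
  destruct (Hbad L L) as [q [Hq [Hp Hng]]]. apply Hng. rewrite Hlen in Hp.
  apply Hloc with qi; auto. intros i Hi. apply (prefix_agree qi q L false); auto. rewrite Hp. auto.
Qed.
End Konig.

Open Scope R_scope.

Lemma half_pow_pos k : 0 < (/2) ^ k.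
Proof. apply pow_lt. lra. Qed.
Lemma half_pow_inv k : (/2) ^ k * INR (2 ^ k) = 1.
Proof. rewrite pow_INR. rewrite <- Rpow_mult_distr. replace (/2 * INR 2) with 1 by (simpl; lra). apply pow1. Qed.
Lemma half_pow_S k : (/2) ^ (S k) = /2 * (/2) ^ k.
Proof. reflexivity. Qed.

Lemma Rabs_le_inv' x b : Rabs x <= b -> - b <= x <= b.
Proof. intros H. destruct (Rcase_abs x) as [Hx|Hx]; [rewrite Rabs_left in H|rewrite Rabs_right in H]; lra. Qed.

Lemma close_true (d : R) (u v k : nat) :
  Rabs (d - INR u / (INR v + 1)) <= (/2) ^ k -> d <= (/2) ^ k ->
  (u * 2 ^ k <= 3 * S v)%nat.
Proof.
  intros Ha Hd. apply Rabs_le_inv' in Ha.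
  assert (Hv : 0 < INR v + 1) by (pose proof (pos_INR v); lra).
  assert (Hu : INR u / (INR v + 1) <= 2 * (/2) ^ k) by lra.
  assert (Hu2 : INR u <= 2 * (/2) ^ k * (INR v + 1)).
  { apply Rmult_le_reg_r with (/ (INR v + 1)). apply Rinv_0_lt_compat; lra.
    rewrite Rmult_assoc, Rinv_r by lra. unfold Rdiv in Hu. lra. }
  apply INR_le. rewrite !mult_INR. rewrite S_INR. simpl (INR 3).
  pose proof (half_pow_inv k). pose proof (half_pow_pos k). pose proof (pos_INR (2 ^ k)).
  assert (INR u * INR (2 ^ k) <= 2 * (INR v + 1)).
  { replace (2 * (INR v + 1)) with (2 * (/2) ^ k * (INR v + 1) * INR (2 ^ k)) by (replace (2 * (/2) ^ k * (INR v + 1) * INR (2 ^ k)) with (2 * (INR v + 1) * ((/2) ^ k * INR (2 ^ k))) by ring; rewrite H; ring).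
    apply Rmult_le_compat_r; lra. }
  rewrite !S_INR. simpl (INR 1). replace (INR 0 + 1 + 1 + 1) with 3 by (simpl; lra). pose proof (pos_INR v). lra.
Qed.

Lemma close_bound (d : R) (u v k : nat) :
  Rabs (d - INR u / (INR v + 1)) <= (/2) ^ k -> (u * 2 ^ k <= 3 * S v)%nat ->
  d <= 4 * (/2) ^ k.
Proof.
  intros Ha Hn. apply Rabs_le_inv' in Ha. apply le_INR in Hn. rewrite mult_INR in Hn. replace (INR (3 * S v)) with (3 * (INR v + 1)) in Hn by (rewrite mult_INR, (S_INR v); replace (INR 3) with 3 by (simpl; lra); ring).
  assert (Hv : 0 < INR v + 1) by (pose proof (pos_INR v); lra).
  pose proof (half_pow_inv k). pose proof (half_pow_pos k).
  assert (INR u <= 3 * (INR v + 1) * (/2) ^ k).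
  { replace (INR u) with (INR u * INR (2 ^ k) * (/2) ^ k) by (replace (INR u * INR (2 ^ k) * (/2) ^ k) with (INR u * ((/2) ^ k * INR (2 ^ k))) by ring; rewrite H; ring).
    apply Rmult_le_compat_r; lra. }
  assert (INR u / (INR v + 1) <= 3 * (/2) ^ k).
  { unfold Rdiv. apply Rmult_le_reg_r with (INR v + 1). lra. rewrite Rmult_assoc, Rinv_l by lra. lra. }
  lra.
Qed.

Lemma cauchy_bound (M : cmetric) (p : baire) (y : cm_carrier M) :
  (forall x y z, cm_d M x z <= cm_d M x y + cm_d M y z) ->
  (forall x y, cm_d M x y = cm_d M y x) ->
  delta (cauchy_space M) p y -> forall m, cm_d M (cm_alpha M (p m)) y <= (/2) ^ m.
Proof.
  intros Htri Hsym [Hc Hl] m. apply Rle_plus_epsilon. intros eps Heps.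
  destruct (Hl eps Heps) as [N HN].
  specialize (HN (S (N + m)) ltac:(lia)). specialize (Hc m (S (N + m)) ltac:(lia)).
  pose proof (Htri (cm_alpha M (p m)) (cm_alpha M (p (S (N + m)))) y). lra.
Qed.

Open Scope nat_scope.

Lemma div2_lt t K : t < K + K -> Nat.div2 t < K.
Proof. intros. rewrite Nat.div2_div. apply Nat.Div0.div_lt_upper_bound; lia. Qed.

Lemma prefix_bpair_eq (p : baire) q1 q2 L k : (forall i, i < L -> q1 i = q2 i) -> k <= L + L ->
  prefix (bpair p q1) k = prefix (bpair p q2) k.
Proof. intros H Hk. apply prefix_ext. intros t Ht. unfold bpair. destruct (Nat.even t); auto. apply H. apply div2_lt. lia. Qed.

Lemma ff_nz B G t : t < B -> G t <> 0 -> ff B G <> 0.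
Proof. intros Ht HG. destruct (ff_spec B G) as [[_ H]|[t' [_ [H1 [H2 _]]]]]. exfalso; apply HG, H; auto. congruence. Qed.

Section Core.
Variables (eH e1 e2 : recf) (U1 U2 : list nat -> nat) (M : cmetric) (fx : cm_carrier M) (p : baire) (T : tree) (r : R).
Hypothesis Htri : forall x y z, (cm_d M x z <= cm_d M x y + cm_d M y z)%R.
Hypothesis Hsym : forall x y, cm_d M x y = cm_d M y x.
Hypothesis Happ : forall i j k, (Rabs (cm_d M (cm_alpha M i) (cm_alpha M j) - INR (U1 [i;j;k]) / (INR (U2 [i;j;k]) + 1)) <= (/2)^k)%R.
Hypothesis Hr : (/2 < r)%R.
Hypothesis Hm : measure_ge (paths T) r.
Hypothesis HQ : forall q, paths T q -> exists rq, delta (cauchy_space M) rq fx /\ machine_computes eH (bpair p (fun i => bit (q i))) rq.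

Definition bj j := fun i => bitf i j.
Definition hitP n s L j := ff (S (L+L)) (fun k => evalc eH s [npair (n+5) (code (prefix (bpair p (bj j)) k))] - 1).
Definition countP n s L j := cnt (2^L) (fun i => if hitP n s L i =? 0 then 0 else closef U1 U2 (pred (hitP n s L i)) (pred (hitP n s L j)) (n+4)).
Definition testP n s L j := if hitP n s L j =? 0 then 0 else if S (2^L) <=? countP n s L j + countP n s L j then hitP n s L j else 0.
Definition stageP n s := ff (S s) (fun L => ff (2^L) (fun j => testP n s L j)).

Lemma cp_eq K j k : k <= K + K -> cp (code (prefix p K)) j k = code (prefix (bpair p (bj j)) k).
Proof.
  intros Hk. rewrite cp_code. unfold prefix at 2. f_equal. apply map_ext_in. intros t Ht. apply in_seq in Ht.
  unfold elemf, bpair. rewrite par_spec, <- Nat.negb_odd. destruct (Nat.odd t); simpl. reflexivity.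
  rewrite nthc_code. apply prefix_nth. apply div2_lt. lia.
Qed.

Lemma hit_eq K n s L j : L <= K -> hitf eH (code (prefix p K)) n s L j = hitP n s L j.
Proof. intros HL. unfold hitf, hitP. apply ff_ext. intros k Hk. rewrite cp_eq by lia. reflexivity. Qed.

Lemma stage_eq K n s : s < K -> stagef eH U1 U2 (code (prefix p K)) n s = stageP n s.
Proof.
  intros Hs. unfold stagef, stageP. apply ff_ext. intros L HL. apply ff_ext. intros j _.
  unfold testf, testP, countf, countP. rewrite !hit_eq by lia.
  assert (cnt (2 ^ L) (fun i => if hitf eH (code (prefix p K)) n s L i =? 0 then 0
     else closef U1 U2 (Init.Nat.pred (hitf eH (code (prefix p K)) n s L i)) (Init.Nat.pred (hitP n s L j)) (n + 4))
   = cnt (2 ^ L) (fun i => if hitP n s L i =? 0 then 0 else closef U1 U2 (Init.Nat.pred (hitP n s L i)) (Init.Nat.pred (hitP n s L j)) (n + 4))).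
  { apply cnt_ext. intros. rewrite hit_eq by lia. reflexivity. }
  rewrite H. reflexivity.
Qed.

Lemma main_eq K n : mainf eH U1 U2 (npair n (code (prefix p K))) = ff K (stageP n).
Proof.
  unfold mainf. rewrite sndp_npair, fstp_npair, lenc_code, prefix_len. apply ff_ext. intros. apply stage_eq. auto.
Qed.

Lemma bj_name q L j : prefix q L = wordb j L -> forall i, i < L -> bj j i = bit (q i).
Proof. intros Hp i Hi. unfold bj. rewrite (bitf_bit i j L Hi). rewrite <- Hp. rewrite prefix_nth by auto. reflexivity. Qed.

Lemma value_lemma n s L j a q : paths T q -> prefix q L = wordb j L -> hitP n s L j = S a ->
  (cm_d M (cm_alpha M a) fx <= (/2) ^ (n+5))%R.
Proof.
  intros Hq Hp Hh. unfold hitP in Hh.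
  destruct (ff_spec (S (L+L)) (fun k => evalc eH s [npair (n+5) (code (prefix (bpair p (bj j)) k))] - 1))
    as [[H1 _]|[k [Hk [H1 [H2 _]]]]]; [congruence|].
  rewrite Hh in H1. symmetry in H1.
  assert (Hev : evalc eH s [npair (n + 5) (code (prefix (bpair p (bj j)) k))] = S (S a)) by lia.
  apply evalc_sound in Hev.
  rewrite (prefix_bpair_eq p (bj j) (fun i => bit (q i)) L k) in Hev; [| apply bj_name; auto | lia].
  destruct (HQ q Hq) as [rq [Hd Hmc]].
  destruct (Hmc (n+5)) as [_ Hu]. apply Hu in Hev. subst a.
  apply cauchy_bound; auto.
Qed.

Lemma closef_01 a b k : closef U1 U2 a b k = 0 \/ closef U1 U2 a b k = 1.
Proof. unfold closef. destruct (_ <=? _); auto. Qed.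

Lemma closef_true a b k : (cm_d M (cm_alpha M a) (cm_alpha M b) <= (/2) ^ k)%R -> closef U1 U2 a b k = 1.
Proof. intros H. unfold closef. replace (U1 [a; b; k] * 2 ^ k <=? 3 * S (U2 [a; b; k])) with true; auto.
  symmetry. apply Nat.leb_le. apply close_true with (cm_d M (cm_alpha M a) (cm_alpha M b)); auto. Qed.

Lemma closef_bound a b k : closef U1 U2 a b k = 1 -> (cm_d M (cm_alpha M a) (cm_alpha M b) <= 4 * (/2) ^ k)%R.
Proof. unfold closef. destruct (_ <=? _) eqn:E; try discriminate. intros _. apply Nat.leb_le in E.
  eapply close_bound; eauto. Qed.

Lemma correct_lemma n s a : stageP n s = S a -> (cm_d M (cm_alpha M a) fx <= 9/32 * (/2) ^ n)%R.
Proof.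
  intros Hs. unfold stageP in Hs.
  destruct (ff_spec (S s) (fun L => ff (2 ^ L) (fun j => testP n s L j))) as [[H1 _]|[L [HL [H1 [H2 _]]]]]; [congruence|].
  rewrite Hs in H1. symmetry in H1.
  destruct (ff_spec (2 ^ L) (fun j => testP n s L j)) as [[H3 _]|[j [Hj [H3 [H4 _]]]]]; [congruence|].
  rewrite H1 in H3. symmetry in H3. unfold testP in H3.
  destruct (hitP n s L j =? 0) eqn:E0; try discriminate.
  destruct (S (2 ^ L) <=? countP n s L j + countP n s L j) eqn:E1; try discriminate.
  apply Nat.leb_le in E1.
  set (Bc := fun i => andb (negb (hitP n s L i =? 0)) (closef U1 U2 (pred (hitP n s L i)) (pred (hitP n s L j)) (n+4) =? 1)).
  assert (Hc : countP n s L j = cnt (2 ^ L) (fun i => ind (Bc i))).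
  { unfold countP. apply cnt_ext. intros i _. unfold Bc, ind.
    destruct (hitP n s L i =? 0); simpl; auto.
    destruct (closef_01 (pred (hitP n s L i)) (pred (hitP n s L j)) (n+4)) as [E|E]; rewrite E; auto. }
  rewrite Hc in E1.
  destruct (ML_contra T r Hr Hm Bc L ltac:(lia)) as [i [q [Hi [HB [Hq Hp]]]]].
  unfold Bc in HB. apply andb_prop in HB. destruct HB as [HB1 HB2].
  apply Nat.eqb_eq in HB2. apply Bool.negb_true_iff in HB1. apply Nat.eqb_neq in HB1.
  destruct (hitP n s L i) as [|ai] eqn:Ei; [congruence|].
  pose proof (value_lemma n s L i ai q Hq Hp Ei) as Hv.
  rewrite H3 in HB2. simpl in HB2. apply closef_bound in HB2.
  pose proof (Htri (cm_alpha M a) (cm_alpha M ai) fx).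
  rewrite Hsym in HB2.
  rewrite Nat.add_comm in Hv. rewrite Nat.add_comm in HB2.
  rewrite pow_add in Hv, HB2. 
  pose proof (pow_lt (/2) n ltac:(lra)).
  simpl in Hv, HB2. lra.
Qed.

Definition goodq n (q : nat -> bool) L := exists k, k <= L + L /\ exists a,
  eval eH [npair (n+5) (code (prefix (bpair p (fun i => bit (q i))) k))] (S a).

Lemma exist_lemma n : exists s, stageP n s <> 0.
Proof.
  destruct (konig T (goodq n)) as [L HL].
  { intros q L L' [k [Hk Ha]] HL'. exists k. split; auto. lia. }
  { intros q q' L Hqq [k [Hk [a Ha]]]. exists k. split; auto. exists a.
    rewrite <- (prefix_bpair_eq p (fun i => bit (q i)) (fun i => bit (q' i)) L k); auto.
    intros. rewrite Hqq; auto. }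
  { intros q Hq. destruct (HQ q Hq) as [rq [_ Hmc]]. destruct (Hmc (n+5)) as [[k Hk] _].
    exists k. exists k. split. lia. eauto. }
  set (Bs := fun j => if excluded_middle_informative (exists q, paths T q /\ prefix q L = wordb j L) then true else false).
  assert (HBs : forall j, Bs j = true -> exists q, paths T q /\ prefix q L = wordb j L).
  { intros j. unfold Bs. destruct (excluded_middle_informative _); auto. discriminate. }
  assert (Hcnt : 2 ^ L < 2 * cnt (2 ^ L) (fun j => ind (Bs j))).
  { apply (ML T r Hr Hm). intros q Hq.
    destruct (wordb_surj (prefix q L)) as [j [Hj Hw]]. rewrite prefix_len in Hj, Hw.
    exists j. repeat split; auto. unfold Bs. destruct (excluded_middle_informative _); auto.
    exfalso. apply n0. exists q. auto. }
  assert (Hfuel : exists F0, forall F, F0 <= F -> forall j, j < 2 ^ L -> Bs j = true ->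
     exists a, hitP n F L j = S a).
  { apply fuel_bound with (P := fun j F => Bs j = true -> exists a, hitP n F L j = S a).
    intros j Hj. destruct (Bs j) eqn:EB; [|exists 0; intros; discriminate].
    destruct (HBs j EB) as [q [Hq Hp]].
    destruct (HL q Hq) as [k [Hk [a Ha]]].
    rewrite <- (prefix_bpair_eq p (bj j) (fun i => bit (q i)) L k) in Ha; [|apply bj_name; auto|lia].
    destruct (evalc_complete _ _ _ Ha) as [F0 HF0]. exists F0. intros F HF _.
    unfold hitP. destruct (ff (S (L + L)) _) eqn:Eff; eauto.
    exfalso. revert Eff. apply ff_nz with k. lia. rewrite HF0 by auto. simpl. lia. }
  destruct Hfuel as [F1 HF1].
  exists (L + F1).
  unfold stageP. apply ff_nz with L. lia.
  destruct (cnt_pos (2 ^ L) (fun j => ind (Bs j)) ltac:(lia)) as [j0 [Hj0 Hb0]].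
  assert (EB0 : Bs j0 = true) by (unfold ind in Hb0; destruct (Bs j0); auto; congruence).
  apply ff_nz with j0; auto.
  destruct (HF1 (L + F1) ltac:(lia) j0 Hj0 EB0) as [a0 Ha0].
  destruct (HBs j0 EB0) as [q0 [Hq0 Hp0]].
  pose proof (value_lemma n (L+F1) L j0 a0 q0 Hq0 Hp0 Ha0) as Hv0.
  unfold testP. rewrite Ha0. cbn [Nat.eqb].
  assert (Hge : cnt (2 ^ L) (fun j => ind (Bs j)) <= countP n (L + F1) L j0).
  { unfold countP. apply cnt_le. intros i Hi. unfold ind. destruct (Bs i) eqn:EBi; [|lia].
    destruct (HF1 (L + F1) ltac:(lia) i Hi EBi) as [ai Hai]. rewrite Hai, Ha0. simpl.
    destruct (HBs i EBi) as [qi [Hqi Hpi]].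
    pose proof (value_lemma n (L+F1) L i ai qi Hqi Hpi Hai) as Hvi.
    rewrite closef_true. lia.
    pose proof (Htri (cm_alpha M ai) fx (cm_alpha M a0)). rewrite (Hsym fx) in H.
    replace (n + 5) with (S (n + 4)) in Hvi, Hv0 by lia. rewrite half_pow_S in Hvi, Hv0. lra. }
  replace (S (2 ^ L) <=? countP n (L + F1) L j0 + countP n (L + F1) L j0) with true. discriminate.
  symmetry. apply Nat.leb_le. lia.
Qed.
End Core.


Section Real.
Variables (Z : rep_space) (Mv : mvfun Z Cantor).
Hypothesis HZ : is_rep_space Z.

Lemma choose_name (r : baire) : exists q : baire, forall z, delta Z r z -> mvdom Mv z ->
   exists y, delta Cantor q y /\ Mv z y.
Proof.
  destruct (classic (exists z, delta Z r z /\ mvdom Mv z)) as [[z [Hz [y Hy]]]|Hn].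
  - exists (fun i => bit (y i)). intros z' Hz' _. destruct HZ as [Hsv _].
    rewrite <- (Hsv _ _ _ Hz Hz'). exists y. split; auto. intros n; reflexivity.
  - exists (fun _ => 0). intros z Hz Hd. exfalso. apply Hn. eauto.
Qed.

Definition cname r := proj1_sig (constructive_indefinite_description _ (choose_name r)).

Lemma real_ex (r0 : baire) (z0 : carrier Z) (y0 : nat -> bool) : delta Z r0 z0 -> Mv z0 y0 ->
  exists G : pfun, realizer G Mv /\ (forall r, pdom G r -> exists z, delta Z r z /\ mvdom Mv z)
     /\ pval G r0 = (fun i => bit (y0 i)).
Proof.
  intros Hz0 Hy0.
  exists {| pdom := fun r => exists z, delta Z r z /\ mvdom Mv z;
            pval := fun r => if excluded_middle_informative (r = r0) then (fun i => bit (y0 i)) else cname r |}.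
  split; [|split].
  - intros r z Hz Hd. split. simpl. exists z; auto. simpl. destruct (excluded_middle_informative (r = r0)).
    + subst. destruct HZ as [Hsv _]. rewrite <- (Hsv _ _ _ Hz0 Hz). exists y0. split; auto.
    + unfold cname. destruct (constructive_indefinite_description _ _) as [q Hq]. simpl. apply Hq; auto.
  - simpl. auto.
  - simpl. destruct (excluded_middle_informative (r0 = r0)); congruence.
Qed.

Lemma real_ex0 : exists G : pfun, realizer G Mv /\ (forall r, pdom G r -> exists z, delta Z r z /\ mvdom Mv z).
Proof.
  exists {| pdom := fun r => exists z, delta Z r z /\ mvdom Mv z; pval := cname |}.
  split.
  - intros r z Hz Hd. split. simpl. exists z; auto. simpl. unfold cname. destruct (constructive_indefinite_description _ _) as [q Hq]. simpl. apply Hq; auto.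
  - simpl. auto.
Qed.
End Real.

Lemma choice3 (e : recf) : (forall i j k, exists u, eval e [i;j;k] u) ->
  exists U : list nat -> nat, forall l, length l = 3 -> eval e l (U l).
Proof.
  intros He.
  exists (fun l => proj1_sig (constructive_indefinite_description _ (He (nth 0 l 0) (nth 1 l 0) (nth 2 l 0)))).
  intros l Hl. destruct (constructive_indefinite_description _ _) as [u Hu]. simpl.
  destruct l as [|a [|b [|c [|? ?]]]]; simpl in *; try lia. exact Hu.
Qed.

Lemma half_pow_le i j : i <= j -> ((/2) ^ j <= (/2) ^ i)%R.
Proof. intros H. replace j with (i + (j - i)) by lia. rewrite pow_add.
  pose proof (half_pow_pos i). assert ((/2) ^ (j - i) <= 1)%R.
  { generalize (j - i). induction n; simpl. lra. pose proof (half_pow_pos n). lra. }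
  nra. Qed.

Lemma ff_same B B' G : ff B G <> 0 -> ff B' G <> 0 -> ff B G = ff B' G.
Proof.
  intros H1 H2. rewrite <- (ff_mono B (B + B') G) by (auto; lia).
  rewrite <- (ff_mono B' (B + B') G) by (auto; lia). reflexivity.
Qed.

Open Scope R_scope.
Theorem theorem13p2 (X : rep_space) (M : cmetric)
  (f : carrier X -> carrier (cauchy_space M)) :
  is_rep_space X ->
  is_computable_metric_space M ->
  (exists (Z : rep_space) (g : mvfun Z Tr),
      is_rep_space Z /\ weihrauch_le (sv_mv f) (mvcomp WWKL_half g)) ->
  computable (sv_mv (X := X) (Y := cauchy_space M) f).
Proof.
  intros HX HM [Z [g [HZ [H [Kf [HHc [HKc Hwl]]]]]]].
  destruct HHc as [eH HeH].
  destruct HM as [Hnn [Hd0 [Hsym [Htri [Hdense [e1 [e2 Happ]]]]]]].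
  destruct (choice3 e1) as [U1 HU1]. { intros i j k. destruct (Happ i j k) as [u [v [? _]]]. eauto. }
  destruct (choice3 e2) as [U2 HU2]. { intros i j k. destruct (Happ i j k) as [u [v [_ [? _]]]]. eauto. }
  assert (Happ' : forall i j k, Rabs (cm_d M (cm_alpha M i) (cm_alpha M j) - INR (U1 [i;j;k]) / (INR (U2 [i;j;k]) + 1)) <= (/2)^k).
  { intros. destruct (Happ i j k) as [u [v [Hu [Hv Hb]]]].
    rewrite <- (eval_det _ _ _ Hu _ (HU1 [i;j;k] eq_refl)), <- (eval_det _ _ _ Hv _ (HU2 [i;j;k] eq_refl)). exact Hb. }
  set (Mv := mvcomp WWKL_half g).
  assert (Key : forall p x, delta X p x -> exists T r, (/2 < r) /\ measure_ge (paths T) r /\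
     forall q, paths T q -> exists rq, delta (cauchy_space M) rq (f x) /\ machine_computes eH (bpair p (fun i => bit (q i))) rq).
  { intros p x Hpx.
    destruct (real_ex0 Z Mv HZ) as [G0 [HG0 HG0d]].
    destruct (Hwl G0 HG0 p x Hpx) as [[HKp [HGp _]] _]. { exists (f x). reflexivity. }
    destruct (HG0d _ HGp) as [z [Hz [y0 Hy0]]].
    destruct Hy0 as [[T [HgT [[r [Hr Hm]] HpT]]] Hall].
    exists T, r. split; auto. split; auto.
    intros q Hq.
    assert (Hzq : Mv z q). { split. exists T. split; auto. split; auto. exists r; auto. exact Hall. }
    destruct (real_ex Z Mv HZ _ _ _ Hz Hzq) as [G [HG [_ HGv]]].
    destruct (Hwl G HG p x Hpx) as [[_ [_ HHd]] [y [Hy Hyf]]]. { exists (f x); reflexivity. }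
    cbn [pval pdom] in *. rewrite HGv in HHd, Hy.
    exists (pval H (bpair p (fun i => bit (q i)))). split.
    - unfold sv_mv in Hyf. subst y. exact Hy.
    - apply HeH. exact HHd. }
  set (st := fun p n => stageP eH U1 U2 p n).
  assert (Hex : forall p x, delta X p x -> forall n, exists s, st p n s <> 0%nat).
  { intros p x Hpx n. destruct (Key p x Hpx) as [T [r [Hr [Hm HQ]]]].
    eapply (exist_lemma eH U1 U2 M (f x) p T r); eauto. }
  set (val := fun p n => match excluded_middle_informative (exists s, st p n s <> 0%nat) with
     | left h => pred (ff (S (proj1_sig (constructive_indefinite_description _ h))) (st p n))
     | right _ => 0%nat end).
  assert (Hval : forall p x, delta X p x -> forall n, exists s1, ff (S s1) (st p n) <> 0%nat /\ ff (S s1) (st p n) = S (val p n)).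
  { intros p x Hpx n. unfold val. destruct (excluded_middle_informative _) as [h|h].
    - destruct (constructive_indefinite_description _ h) as [s1 Hs1]. simpl. exists s1.
      assert (ff (S s1) (st p n) <> 0%nat) by (apply ff_nz with s1; auto).
      split; auto. destruct (ff (S s1) (st p n)); [congruence|reflexivity].
    - exfalso. apply h. eapply Hex; eauto. }
  exists {| pdom := fun p => exists x, delta X p x; pval := fun p n => val p n |}.
  split.
  - exists (comp 1 (Main eH e1 e2 U1 U2)). intros p [x Hpx] n. cbn [pval].
    destruct (Hval p x Hpx n) as [s1 [Hnz Hs1]].
    split.
    + exists (S s1). rewrite <- Hs1. unfold st. rewrite <- (main_eq eH U1 U2 p (S s1) n). apply main_eval; auto.
    + intros k v Hev. pose proof (main_eval eH e1 e2 U1 U2 HU1 HU2 (npair n (code (prefix p k)))) as Hm.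
      pose proof (eval_det _ _ _ Hev _ Hm) as E. rewrite main_eq in E. fold (st p n) in E.
      assert (ff k (st p n) = ff (S s1) (st p n)) by (apply ff_same; auto; congruence).
      congruence.
  - intros p x Hpx _. split. { exists x; auto. }
    exists (f x). split; [|reflexivity].
    destruct (Key p x Hpx) as [T [r [Hr [Hm HQ]]]].
    assert (Hb : forall n, cm_d M (cm_alpha M (val p n)) (f x) <= 9/32 * (/2) ^ n).
    { intros n. destruct (Hval p x Hpx n) as [s1 [Hnz Hs1]].
      destruct (ff_spec (S s1) (st p n)) as [[E _]|[t [_ [E1 [E2 _]]]]]; [congruence|].
      eapply (correct_lemma eH U1 U2 M (f x) p T r); eauto. unfold st in E1. rewrite <- E1. exact Hs1. }
    cbn [delta cauchy_space pval]. split.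
    + intros i j Hij. pose proof (Hb i). pose proof (Hb j).
      pose proof (Htri (cm_alpha M (val p i)) (f x) (cm_alpha M (val p j))).
      rewrite (Hsym (f x)) in H2. pose proof (half_pow_le i j ltac:(lia)). pose proof (half_pow_pos i). lra.
    + intros eps Heps.
      destruct (pow_lt_1_zero (/2) ltac:(rewrite Rabs_right; lra) eps Heps) as [N HN].
      exists N. intros n Hn. pose proof (Hb n). specialize (HN n Hn).
      rewrite Rabs_right in HN by (apply Rle_ge, pow_le; lra). pose proof (half_pow_pos n). lra.
Qed.
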